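(* Let $g:\mathbb{R}\times(0,\infty)\times\mathbb{R}\to\mathbb{R}^2$ be the Kalman-filter update of a univariate Gaussian belief $b=(\mu,s)^{\mathrm{T}}$ (mean $\mu\in\mathbb{R}$, variance $s>0$) given an observation $y=x+w$ of the scalar state $x$ corrupted by noise $w\sim\mathcal{N}(0,1)$, i.e. $$g(b,y)=\left(\mu+\frac{s}{s+1}(y-\mu),\; s-\frac{s^2}{s+1}\right)^{\mathrm{T}}.$$ Then there exist constants $K_2,K_3,K_4,K_5\ge0$ and positive integers $L_1,L_2$ such that for all $\mu\in\mathbb{R}$, $s>0$, $y\in\mathbb{R}$, $$\|g(b,y)\|_2\le K_2+K_3\|b\|_2^{L_1}+K_4\|y\|_2^{L_2}+K_5\|b\|_2^{L_1}\|y\|_2^{L_2}$$ and $$\left\|\frac{\partial}{\partial b}g(b,y)\right\|_2\le K_2+K_3\|b\|_2^{L_1}+K_4\|y\|_2^{L_2}+K_5\|b\|_2^{L_1}\|y\|_2^{L_2}.$$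
   Context: $\|\cdot\|_2$ on matrices denotes the operator (spectral) norm induced by the Euclidean norm. *)

(* Defs.v *)
From Stdlib Require Import Reals.
From Coquelicot Require Import Coquelicot.
Open Scope R_scope.

Definition g1 (mu s y : R) : R := mu + s / (s + 1) * (y - mu).
Definition g2 (mu s y : R) : R := s - s ^ 2 / (s + 1).

Definition norm2 (a b : R) : R := sqrt (a ^ 2 + b ^ 2).

Definition J11 (mu s y : R) : R := Derive (fun m => g1 m s y) mu.
Definition J12 (mu s y : R) : R := Derive (fun t => g1 mu t y) s.
Definition J21 (mu s y : R) : R := Derive (fun m => g2 m s y) mu.
Definition J22 (mu s y : R) : R := Derive (fun t => g2 mu t y) s.

(* Operator (spectral) norm of the 2x2 matrix [[a, b], [c, d]] induced by the
   Euclidean norm: sup of ||M v||_2 over unit vectors v. *)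
Definition opnorm2 (a b c d : R) : Rbar :=
  Lub_Rbar (fun r => exists v1 v2 : R,
    norm2 v1 v2 = 1 /\ r = norm2 (a * v1 + b * v2) (c * v1 + d * v2)).

Definition pbound (K2 K3 K4 K5 : R) (L1 L2 : nat) (mu s y : R) : R :=
  K2 + K3 * (norm2 mu s) ^ L1 + K4 * (Rabs y) ^ L2
     + K5 * (norm2 mu s) ^ L1 * (Rabs y) ^ L2.

(* Main.v *)
Require Import Defs.
From Stdlib Require Import Reals Lra Psatz.
From Coquelicot Require Import Coquelicot.
Open Scope R_scope.

Lemma div_le1 a b : 0 < b /\ a <= b -> a / b <= 1.
Proof.
  intros [Hb Hab]. unfold Rdiv. rewrite <- (Rinv_r b) by lra.
  apply Rmult_le_compat_r; [left; apply Rinv_0_lt_compat; lra | lra].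
Qed.

Lemma norm2_le a b : norm2 a b <= Rabs a + Rabs b.
Proof.
  unfold norm2. rewrite <- (sqrt_pow2 (Rabs a + Rabs b)) by (pose proof (Rabs_pos a); pose proof (Rabs_pos b); lra).
  apply sqrt_le_1_alt.
  rewrite <- (pow2_abs a) at 1. rewrite <- (pow2_abs b) at 1.
  pose proof (Rabs_pos a); pose proof (Rabs_pos b). nra.
Qed.

Lemma abs_le_norm2_l a b : Rabs a <= norm2 a b.
Proof.
  unfold norm2. rewrite <- (sqrt_pow2 (Rabs a)) by apply Rabs_pos.
  apply sqrt_le_1_alt. rewrite pow2_abs. nra.
Qed.

Lemma abs_le_norm2_r a b : Rabs b <= norm2 a b.
Proof.
  unfold norm2. rewrite <- (sqrt_pow2 (Rabs b)) by apply Rabs_pos.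
  apply sqrt_le_1_alt. rewrite pow2_abs. nra.
Qed.

Lemma lin_bound a b v1 v2 : Rabs v1 <= 1 -> Rabs v2 <= 1 ->
  Rabs (a * v1 + b * v2) <= Rabs a + Rabs b.
Proof.
  intros H1 H2. eapply Rle_trans; [apply Rabs_triang|].
  rewrite !Rabs_mult.
  pose proof (Rabs_pos a); pose proof (Rabs_pos b); nra.
Qed.

Lemma J11_eq mu s y : 0 < s -> J11 mu s y = 1 / (s + 1).
Proof.
  intros Hs. unfold J11, g1. apply is_derive_unique.
  auto_derive; [lra|]. field. lra.
Qed.

Lemma J12_eq mu s y : 0 < s -> J12 mu s y = (y - mu) / (s + 1) ^ 2.
Proof.
  intros Hs. unfold J12, g1. apply is_derive_unique.
  auto_derive; [lra|]. field. lra.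
Qed.

Lemma J21_eq mu s y : J21 mu s y = 0.
Proof.
  unfold J21, g2. apply is_derive_unique. auto_derive; [lra|]. ring.
Qed.

Lemma J22_eq mu s y : 0 < s -> J22 mu s y = 1 / (s + 1) ^ 2.
Proof.
  intros Hs. unfold J22, g2. apply is_derive_unique.
  auto_derive; [lra|]. field. lra.
Qed.

Theorem proposition1 :
  exists (K2 K3 K4 K5 : R) (L1 L2 : nat),
    0 <= K2 /\ 0 <= K3 /\ 0 <= K4 /\ 0 <= K5 /\ (0 < L1)%nat /\ (0 < L2)%nat /\
    forall mu s y : R, 0 < s ->
      norm2 (g1 mu s y) (g2 mu s y) <= pbound K2 K3 K4 K5 L1 L2 mu s y /\
      Rbar_le (opnorm2 (J11 mu s y) (J12 mu s y) (J21 mu s y) (J22 mu s y))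
              (Finite (pbound K2 K3 K4 K5 L1 L2 mu s y)).
Proof.
  exists 2, 2, 1, 0, 1%nat, 1%nat.
  do 6 (split; [lra || lia|]).
  intros mu s y Hs. split.
  - unfold pbound. rewrite !pow_1.
    pose proof (abs_le_norm2_l mu s). pose proof (abs_le_norm2_r mu s).
    eapply Rle_trans; [apply norm2_le|].
    assert (Rabs (g1 mu s y) <= Rabs mu + Rabs y).
    { unfold g1.
      assert (0 <= s / (s+1) <= 1).
      { split. (unfold Rdiv; apply Rmult_le_pos; [lra| left; apply Rinv_0_lt_compat; lra]). apply div_le1; lra. }
      set (t := s / (s+1)) in *.
      replace (mu + t * (y - mu)) with ((1 - t) * mu + t * y) by ring.
      eapply Rle_trans; [apply Rabs_triang|]. rewrite !Rabs_mult.
      rewrite (Rabs_pos_eq t) by lra. rewrite (Rabs_pos_eq (1 - t)) by lra.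
      pose proof (Rabs_pos mu); pose proof (Rabs_pos y); nra. }
    assert (Rabs (g2 mu s y) <= 1).
    { unfold g2. replace (s - s^2/(s+1)) with (s/(s+1)) by (field; lra).
      rewrite Rabs_pos_eq. apply div_le1; lra. (unfold Rdiv; apply Rmult_le_pos; [lra| left; apply Rinv_0_lt_compat; lra]). }
    pose proof (Rabs_pos y). pose proof (Rabs_pos mu). rewrite !Rmult_0_l. lra.
  - unfold opnorm2.
    destruct (Lub_Rbar_correct (fun r => exists v1 v2 : R,
      norm2 v1 v2 = 1 /\ r = norm2 (J11 mu s y * v1 + J12 mu s y * v2)
        (J21 mu s y * v1 + J22 mu s y * v2))) as [_ Hl].
    apply Hl. intros r [v1 [v2 [Hn ->]]].
    simpl. unfold pbound. rewrite !pow_1.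
    rewrite J11_eq, J12_eq, J21_eq, J22_eq by lra.
    pose proof (abs_le_norm2_l v1 v2). pose proof (abs_le_norm2_r v1 v2).
    pose proof (abs_le_norm2_l mu s).
    eapply Rle_trans; [apply norm2_le|].
    assert (Hs2 : 1 <= (s+1)^2) by nra.
    assert (Ha : Rabs (1/(s+1)) <= 1).
    { rewrite Rabs_pos_eq. apply div_le1; lra. (unfold Rdiv; apply Rmult_le_pos; [lra| left; apply Rinv_0_lt_compat; lra]). }
    assert (Hd : Rabs (1/(s+1)^2) <= 1).
    { rewrite Rabs_pos_eq. apply div_le1; lra. (unfold Rdiv; apply Rmult_le_pos; [lra| left; apply Rinv_0_lt_compat; lra]). }
    assert (Hb : Rabs ((y - mu)/(s+1)^2) <= Rabs y + Rabs mu).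
    { unfold Rdiv. rewrite Rabs_mult. rewrite (Rabs_pos_eq (/ _)).
      2: { left. apply Rinv_0_lt_compat. lra. }
      assert (/ (s+1)^2 <= 1). { rewrite <- Rinv_1. apply Rinv_le_contravar; lra. }
      assert (0 < / (s+1)^2) by (apply Rinv_0_lt_compat; lra).
      pose proof (Rabs_pos (y - mu)).
      assert (Rabs (y - mu) <= Rabs y + Rabs mu) by apply Rabs_triang_inv2 || (unfold Rminus; eapply Rle_trans; [apply Rabs_triang|]; rewrite Rabs_Ropp; lra).
      nra. }
    pose proof (lin_bound (1/(s+1)) ((y - mu)/(s+1)^2) v1 v2 ltac:(lra) ltac:(lra)).
    pose proof (lin_bound 0 (1/(s+1)^2) v1 v2 ltac:(lra) ltac:(lra)).
    rewrite Rabs_R0 in *. pose proof (Rabs_pos mu). pose proof (Rabs_pos y). rewrite !Rmult_0_l in *. lra.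
Qed.
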